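(* Let $(R,\mathfrak m)$ be a noetherian local ring and $M$ an arbitrary $R$-module. Then $$\operatorname{Ass}_R(D(M))\subseteq \operatorname{Att}_R(M),$$ and the set of prime ideals which are maximal (with respect to inclusion) in $\operatorname{Ass}_R(D(M))$ coincides with the set of prime ideals which are maximal in $\operatorname{Att}_R(M)$.
   Context: $E=E_R(R/\mathfrak m)$ denotes a fixed injective hull of $R/\mathfrak m$, and $D(\cdot)=\operatorname{Hom}_R(\cdot,E)$ is the Matlis duality functor. For an arbitrary $R$-module $N$ (not necessarily finitely generated or artinian): $\operatorname{Ass}_R(N)$ is the set of prime ideals $\mathfrak p$ of $R$ such that $\mathfrak p=\operatorname{Ann}_R(n)$ for some $n\in N$; $\operatorname{Att}_R(N)$ is the set of prime ideals $\mathfrak p$ of $R$ such that $\mathfrak p=\operatorname{Ann}_R(N/U)$ for some $R$-submodule $U\subseteq N$. *)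

(* Defs.v *)
From HB Require Import structures.
From mathcomp Require Import all_boot all_algebra.
Set Implicit Arguments. Unset Strict Implicit. Unset Printing Implicit Defensive.
Import GRing.Theory.
Local Open Scope ring_scope.

Definition subsetP {T} (A B : T -> Prop) := forall x, A x -> B x.
Definition seteqP {T} (A B : T -> Prop) := forall x, A x <-> B x.

Section CommAlg.
Variable R : comNzRingType.

Definition is_ideal (I : R -> Prop) : Prop :=
  I 0 /\ (forall a b, I a -> I b -> I (a + b)) /\ (forall r a, I a -> I (r * a)).

Definition is_prime (P : R -> Prop) : Prop :=
  is_ideal P /\ ~ P 1 /\ (forall a b, P (a * b) -> P a \/ P b).

Definition noetherian : Prop :=
  forall I : nat -> R -> Prop, (forall n, is_ideal (I n)) ->
    (forall n, subsetP (I n) (I n.+1)) ->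
    exists n, forall k, (n <= k)%N -> subsetP (I k) (I n).

Definition local_with_max (m : R -> Prop) : Prop :=
  is_ideal m /\ ~ m 1 /\ (forall I, is_ideal I -> ~ I 1 -> subsetP I m).

Definition is_submod (V : lmodType R) (U : V -> Prop) : Prop :=
  U 0 /\ (forall x y, U x -> U y -> U (x + y)) /\ (forall r x, U x -> U (r *: x)).

(* Annihilator of an element, and of a quotient module V/U. *)
Definition ann_elem (V : lmodType R) (v : V) : R -> Prop := fun r => r *: v = 0.
Definition ann_quot (V : lmodType R) (U : V -> Prop) : R -> Prop :=
  fun r => forall x, U (r *: x).

Definition injective_mod (E : lmodType R) : Prop :=
  forall (A B : lmodType R) (i : {linear A -> B}), injective i ->
    forall f : {linear A -> E}, exists g : {linear B -> E}, forall a, g (i a) = f a.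

(* A monomorphism R/m -> E is the same as the
   choice of the image e0 of the class of 1, an element with Ann(e0) = m; its
   image is the cyclic submodule R e0. *)
Definition injective_hull_of_residue (m : R -> Prop) (E : lmodType R) : Prop :=
  injective_mod E /\
  exists e0 : E, seteqP (ann_elem e0) m /\
    (forall N : E -> Prop, is_submod N -> (exists x, N x /\ x <> 0) ->
       exists y, N y /\ y <> 0 /\ exists s : R, y = s *: e0).

Definition Ass (V : lmodType R) (p : R -> Prop) : Prop :=
  is_prime p /\ exists v : V, seteqP p (ann_elem v).

(* Ass_R(D(M)) with D(M) = Hom_R(M, E), whose R-module structure is
   (r f)(x) = r f(x); thus Ann(f) = {r | forall x, r f(x) = 0}. *)
Definition AssD (M E : lmodType R) (p : R -> Prop) : Prop :=
  is_prime p /\ exists f : {linear M -> E},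
    seteqP p (fun r => forall x, r *: f x = 0).

Definition Att (V : lmodType R) (p : R -> Prop) : Prop :=
  is_prime p /\ exists U : V -> Prop, is_submod U /\ seteqP p (ann_quot U).

Definition maximal_in (S : (R -> Prop) -> Prop) (p : R -> Prop) : Prop :=
  S p /\ forall q, S q -> subsetP p q -> subsetP q p.

End CommAlg.

(* Main.v *)
Require Import Defs.
From HB Require Import structures.
From mathcomp Require Import all_boot all_algebra.
From mathcomp Require Import boolp.
Require Import Defs.
Set Implicit Arguments. Unset Strict Implicit. Unset Printing Implicit Defensive.
Import GRing.Theory.
Local Open Scope ring_scope.
Local Open Scope quotient_scope.

Definition mkLin (R : comNzRingType) (A B : lmodType R) (f : A -> B) (H : linear f) : {linear A -> B} :=
  HB.pack f (GRing.isLinear.Build R A B *:%R f H).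
Lemma mkLinE (R : comNzRingType) (A B : lmodType R) (f : A -> B) (H : linear f) x : mkLin H x = f x.
Proof. by []. Qed.

Section QM.
Variables (R : comNzRingType) (V : lmodType R) (U : V -> Prop) (HU : is_submod U).

Definition Ub : {pred V} := fun x => `[< U x >].

Lemma Ub_closed : zmod_closed Ub.
Proof.
case: HU => H0 [HD HZ]; split; first by apply/asboolP.
move=> u v /asboolP Hu /asboolP Hv; apply/asboolP.
rewrite -scaleN1r; apply: HD => //; exact: HZ.
Qed.

HB.instance Definition _ := GRing.isZmodClosed.Build V Ub Ub_closed.

Definition QT := Quotient.quot Ub.
HB.instance Definition _ := GRing.Zmodule.on QT.
HB.instance Definition _ := EqQuotient.on QT.
Lemma piQ (x y : V) : (\pi_QT x = \pi_QT y) <-> U (x - y).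
Proof.
split.
  by move/eqP; rewrite -Quotient.idealrBE => /asboolP.
by move=> H; apply/eqP; rewrite -Quotient.idealrBE; apply/asboolP.
Qed.
Definition qscale (a : R) (q : QT) : QT := \pi_QT (a *: repr q).

Lemma piD (x y : V) : \pi_QT (x + y) = \pi_QT x + \pi_QT y.
Proof. exact: raddfD. Qed.

Lemma pi_scale a x : \pi_QT (a *: x) = qscale a (\pi_QT x).
Proof.
rewrite /qscale; apply/piQ; rewrite -scalerBr.
have [_ [_ HZ]] := HU; apply: HZ; apply/piQ; by rewrite reprK.
Qed.

Lemma qscaleA a b v : qscale a (qscale b v) = qscale (a * b) v.
Proof. by move: v; apply: (@quotW _ QT) => v; rewrite -!pi_scale scalerA. Qed.
Lemma qscale1 : left_id 1 qscale.
Proof. by move=> v; move: v; apply: (@quotW _ QT) => v; rewrite -!pi_scale scale1r. Qed.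
Lemma qscaleDr : right_distributive qscale +%R.
Proof.
move=> a u v; move: u; apply: (@quotW _ QT) => u; elim/quotW: v => v.
by rewrite -piD -!pi_scale scalerDr piD.
Qed.
Lemma qscaleDl v : {morph qscale^~ v: a b / a + b}.
Proof. move=> a b; move: v; apply: (@quotW _ QT) => v; by rewrite -!pi_scale scalerDl piD. Qed.

HB.instance Definition _ := GRing.Zmodule_isLmodule.Build R QT qscaleA qscale1 qscaleDr qscaleDl.

Lemma piZ a x : \pi_QT (a *: x) = a *: \pi_QT x.
Proof. exact: pi_scale. Qed.

Lemma pi_linear : linear (\pi_QT : V -> QT).
Proof. by move=> a x y; rewrite piD pi_scale. Qed.
HB.instance Definition _ := GRing.isLinear.Build R V QT *:%R (\pi_QT) pi_linear.
Definition piL : {linear V -> QT} := \pi_QT.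

Lemma piQ0 (y : V) : piL y = 0 <-> U y.
Proof.
rewrite -(raddf0 piL); split; first by move/piQ; rewrite subr0.
by move=> H; apply/piQ; rewrite subr0.
Qed.

Lemma ind_exists (W : lmodType R) (phi : {linear V -> W}) :
  (forall u, U u -> phi u = 0) ->
  exists g : {linear QT -> W}, forall v, g (\pi_QT v) = phi v.
Proof.
move=> Hphi.
pose ind (q : QT) : W := phi (repr q).
have indE v : ind (\pi_QT v) = phi v.
  apply/eqP; rewrite -subr_eq0 -linearB; apply/eqP; apply: Hphi.
  by apply/piQ; rewrite reprK.
have Hl : linear ind.
  move=> a u v; move: u; apply: (@quotW _ QT) => u; move: v; apply: (@quotW _ QT) => v.
  by rewrite -piZ -piD !indE linearP.
by exists (mkLin Hl) => v; rewrite mkLinE indE.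
Qed.
End QM.

Lemma nonzero_map (R : comNzRingType) (m : R -> Prop) (E M : lmodType R) :
  local_with_max m -> injective_hull_of_residue m E ->
  forall U : M -> Prop, is_submod U -> forall x, ~ U x ->
  exists h : {linear M -> E}, (forall u, U u -> h u = 0) /\ h x <> 0.
Proof.
move=> [_ [m1 Hmax]] [Einj [e0 [He0 _]]] U HU x nUx.
have [U0 [UD UZ]] := HU.
pose I : R^o -> Prop := fun r => U (r *: x).
have HI : is_submod I.
  split; first by rewrite /I scale0r.
  split; first by move=> a b Ha Hb; rewrite /I scalerDl; apply: UD.
  by move=> r a Ha; rewrite /I -scalerA; apply: UZ.
have Im : subsetP I m.
  apply: Hmax.
    split; first by rewrite /I scale0r.
    split; first by move=> a b Ha Hb; rewrite /I scalerDl; apply: UD.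
    by move=> r a Ha; rewrite /I -scalerA; apply: UZ.
  by rewrite /I scale1r.
have li : linear (fun r : R^o => (r : R) *: piL HU x).
  by move=> a u v; rewrite scalerDl scalerA.
have Hi0 : forall u, I u -> mkLin li u = 0.
  by move=> u Iu; rewrite (mkLinE li) /= -linearZ; apply/piQ0.
have [i Hi] := @ind_exists _ _ _ HI _ (mkLin li) Hi0.
have lf : linear (fun r : R^o => (r : R) *: e0).
  by move=> a u v; rewrite scalerDl scalerA.
have Hf0 : forall u, I u -> mkLin lf u = 0.
  by move=> u Iu; rewrite (mkLinE lf) /=; apply/He0/Im.
have [f Hf] := @ind_exists _ _ _ HI _ (mkLin lf) Hf0.
have iinj : injective i.
  move=> q1 q2; move: q1; apply: (@quotW _ (QT HI)) => r1.
  move: q2; apply: (@quotW _ (QT HI)) => r2.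
  rewrite !Hi !(mkLinE li) => /eqP; rewrite -subr_eq0 -scalerBl => /eqP.
  rewrite -linearZ => /piQ0 H.
  by apply/piQ.
have [g Hg] := Einj _ _ i iinj f.
have lh : linear (fun u : M => g (piL HU u)).
  by move=> a u v; rewrite !linearP.
exists (mkLin lh); split.
  move=> u Uu; rewrite (mkLinE lh) /=.
  have -> : piL HU u = 0 by apply/piQ0.
  exact: linear0.
rewrite (mkLinE lh) /=.
have -> : piL HU x = i (\pi_(QT HI) 1).
  by rewrite Hi (mkLinE li) /= scale1r.
rewrite Hg Hf (mkLinE lf) /= scale1r => e00.
by apply: m1; apply/He0; rewrite /ann_elem e00 scaler0.
Qed.

Section Main.
Variables (R : comNzRingType) (E M : lmodType R).

Definition annf (h : {linear M -> E}) : R -> Prop := fun r => forall y, r *: h y = 0.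

Lemma annf_ideal h : is_ideal (annf h).
Proof.
split; first by move=> y; rewrite scale0r.
split; first by move=> a b Ha Hb y; rewrite scalerDl Ha Hb addr0.
by move=> r a Ha y; rewrite -scalerA Ha scaler0.
Qed.

Definition good (U : M -> Prop) (h : {linear M -> E}) :=
  (forall u, U u -> h u = 0) /\ exists y, h y <> 0.

Lemma sc_lin (a : R) (h : {linear M -> E}) : linear (fun y => a *: h y).
Proof. by move=> b u v; rewrite linearP scalerDr !scalerA mulrC. Qed.

Lemma max_exists (U : M -> Prop) : noetherian R ->
  (exists h, good U h) ->
  exists h, good U h /\ forall h', good U h' -> subsetP (annf h) (annf h') ->
     subsetP (annf h') (annf h).
Proof.
move=> Hn [h0 g0].
apply: contrapT => Hno.
have step : forall h, exists h', good U h -> good U h' /\ subsetP (annf h) (annf h') /\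
    ~ subsetP (annf h') (annf h).
  move=> h; case: (pselect (good U h)) => gh; last by exists h.
  apply: contrapT => Hc; apply: Hno; exists h; split => // h' gh' sub.
  apply: contrapT => ns; apply: Hc; exists h' => _; by [].
pose st h := projT1 (cid (step h)).
have stP h : good U h -> good U (st h) /\ subsetP (annf h) (annf (st h)) /\
    ~ subsetP (annf (st h)) (annf h).
  exact: (projT2 (cid (step h))).
pose sq n := iter n st h0.
have gs n : good U (sq n).
  elim: n => [|n IH] //=; exact: (stP _ IH).1.
have [n Hn'] := Hn (fun n => annf (sq n)) (fun n => annf_ideal _)
   (fun n => (stP _ (gs n)).2.1).
by have := (stP _ (gs n)).2.2; apply; exact: (Hn' n.+1 (leqnSn n)).
Qed.
End Main.

Lemma part1 (R : comNzRingType) (E M : lmodType R) p : AssD M E p -> Att M p.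
Proof.
move=> [pp [f Hf]]; split => //.
exists (fun v => f v = 0); split.
  split; first exact: linear0.
  split; first by move=> x y Hx Hy; rewrite linearD Hx Hy addr0.
  by move=> r x Hx; rewrite linearZ_LR Hx scaler0.
move=> r; rewrite Hf /ann_quot; split => H x; first by rewrite linearZ_LR.
by rewrite -linearZ_LR.
Qed.

Lemma keyK (R : comNzRingType) (m : R -> Prop) (E M : lmodType R) :
  noetherian R -> local_with_max m -> injective_hull_of_residue m E ->
  forall p, Att M p -> exists q, AssD M E q /\ subsetP p q.
Proof.
move=> Hn Hl Hh p [pp [U [HU Hp]]].
have [x nUx] : exists x, ~ U x.
  apply: contrapT => Hc; apply: pp.2.1; apply/Hp => y.
  apply: contrapT => ny; apply: Hc; exists (1 *: y); exact: ny.
have [h0 [h0U h0x]] := nonzero_map Hl Hh HU nUx.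
have [h [[hU [y hy]] hmax]] := @max_exists R E M U Hn (ex_intro _ h0 (conj h0U (ex_intro _ x h0x))).
exists (annf h); split; last first.
  move=> r /Hp pr z; rewrite -linearZ_LR; exact: hU.
split; last by exists h.
split; first exact: annf_ideal.
split.
  by move=> H; apply: hy; rewrite -(scale1r (h y)) H.
move=> a b Hab; case: (pselect (annf h a)) => Ha; first by left.
right.
have g' : good U (mkLin (sc_lin a h)).
  split; first by move=> u Uu; rewrite (mkLinE (sc_lin a h)) /= hU ?scaler0.
  apply: contrapT => Hc; apply: Ha => z; apply: contrapT => nz; apply: Hc; exists z.
  by rewrite (mkLinE (sc_lin a h)).
have sub : subsetP (annf h) (annf (mkLin (sc_lin a h))).
  by move=> r Hr z; rewrite (mkLinE (sc_lin a h)) /= scalerA mulrC -scalerA Hr scaler0.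
apply: (hmax _ g' sub) => z.
by rewrite (mkLinE (sc_lin a h)) /= scalerA mulrC Hab.
Qed.

Unset Implicit Arguments.
Theorem theorem1p11 (R : comNzRingType) (m : R -> Prop) (E M : lmodType R) :
  noetherian R -> local_with_max m -> injective_hull_of_residue m E ->
  (forall p, AssD M E p -> Att M p) /\
  (forall p, maximal_in (AssD M E) p <-> maximal_in (Att M) p).
Proof.
move=> Hn Hl Hh; split; first exact: part1.
move=> p; split.
  move=> [Ap Hmax]; split; first exact: (part1 Ap).
  move=> q Aq pq; have [q' [Aq' qq']] := @keyK _ _ _ M Hn Hl Hh _ Aq.
  have := Hmax q' Aq' (fun r Hr => qq' r (pq r Hr)).
  by move=> H r Hr; apply: H; apply: qq'.
move=> [Ap Hmax].
have [q [Aq pq]] := @keyK _ _ _ M Hn Hl Hh _ Ap.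
have qp := Hmax q (part1 Aq) pq.
split.
  split; first exact: Ap.1.
  have [_ [f Hf]] := Aq; exists f => r; split.
    by move=> /pq /Hf.
  by move=> /Hf /qp.
move=> q' Aq' pq'; exact: Hmax q' (part1 Aq') pq'.
Qed.
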